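(* Let $X$ be a Hilbert space, $\widehat\beta:X\to[0,+\infty)$ convex and lower semicontinuous (hence continuous), $\beta=\partial\widehat\beta$, and for $u\in X$ let $\beta^0(u)$ be the element of $\beta(u)$ of minimal norm. Let $\Psi:[0,+\infty)\to[0,+\infty)$ be continuous. If $\|\beta^0(u)\|_X\le\Psi(\widehat\beta(u))$ for every $u\in X$, then $\|\zeta\|_X\le\Psi(\widehat\beta(u))$ for all $u\in X$ and all $\zeta\in\beta(u)$. *)

(* Defs.v *)
From Stdlib Require Import Reals.
Open Scope R_scope.

Record HilbertSpace := {
  hcarrier :> Type;
  hzero : hcarrier;
  hadd : hcarrier -> hcarrier -> hcarrier;
  hopp : hcarrier -> hcarrier;
  hscal : R -> hcarrier -> hcarrier;
  hinner : hcarrier -> hcarrier -> R;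
  hadd_assoc : forall x y z, hadd x (hadd y z) = hadd (hadd x y) z;
  hadd_comm : forall x y, hadd x y = hadd y x;
  hadd_zero : forall x, hadd x hzero = x;
  hadd_opp : forall x, hadd x (hopp x) = hzero;
  hscal_assoc : forall a b x, hscal a (hscal b x) = hscal (a * b) x;
  hscal_one : forall x, hscal 1 x = x;
  hscal_distr_l : forall a x y, hscal a (hadd x y) = hadd (hscal a x) (hscal a y);
  hscal_distr_r : forall a b x, hscal (a + b) x = hadd (hscal a x) (hscal b x);
  hinner_sym : forall x y, hinner x y = hinner y x;
  hinner_add_l : forall x y z, hinner (hadd x y) z = hinner x z + hinner y z;
  hinner_scal_l : forall a x y, hinner (hscal a x) y = a * hinner x y;
  hinner_pos : forall x, 0 <= hinner x x;
  hinner_def : forall x, hinner x x = 0 -> x = hzero;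
  hcomplete : forall u : nat -> hcarrier,
    (forall eps, eps > 0 -> exists N, forall n m, (n >= N)%nat -> (m >= N)%nat ->
        sqrt (hinner (hadd (u n) (hopp (u m))) (hadd (u n) (hopp (u m)))) < eps) ->
    exists l, forall eps, eps > 0 -> exists N, forall n, (n >= N)%nat ->
        sqrt (hinner (hadd (u n) (hopp l)) (hadd (u n) (hopp l))) < eps
}.

Arguments hzero {h}.
Arguments hadd {h}.
Arguments hopp {h}.
Arguments hscal {h}.
Arguments hinner {h}.

Definition hsub {X : HilbertSpace} (x y : X) : X := hadd x (hopp y).
Definition hnorm {X : HilbertSpace} (x : X) : R := sqrt (hinner x x).

Definition convex_fun {X : HilbertSpace} (f : X -> R) : Prop :=
  forall (x y : X) (t : R), 0 <= t <= 1 ->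
    f (hadd (hscal t x) (hscal (1 - t) y)) <= t * f x + (1 - t) * f y.

Definition lsc_fun {X : HilbertSpace} (f : X -> R) : Prop :=
  forall (x : X) (eps : R), eps > 0 -> exists delta, delta > 0 /\
    forall y : X, hnorm (hsub y x) < delta -> f x - eps < f y.

Definition subdiff {X : HilbertSpace} (f : X -> R) (u zeta : X) : Prop :=
  forall v : X, f u + hinner zeta (hsub v u) <= f v.

Definition min_norm_subgrad {X : HilbertSpace} (f : X -> R) (u zeta0 : X) : Prop :=
  subdiff f u zeta0 /\ forall zeta, subdiff f u zeta -> hnorm zeta0 <= hnorm zeta.

Definition continuous_on_nonneg (Psi : R -> R) : Prop :=
  forall t, 0 <= t -> forall eps, eps > 0 -> exists delta, delta > 0 /\
    forall s, 0 <= s -> Rabs (s - t) < delta -> Rabs (Psi s - Psi t) < eps.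

(* Main.v *)
Require Import Defs.
From Stdlib Require Import Reals Lra Psatz Classical IndefiniteDescription.
Open Scope R_scope.

Definition nsq {X : HilbertSpace} (x : X) : R := hinner x x.
Definition mid {X : HilbertSpace} (a b : X) : X := hadd (hscal (/2) a) (hscal (1 - /2) b).
Definition conv {X : HilbertSpace} (v : nat -> X) (l : X) : Prop :=
  forall eps, eps > 0 -> exists N, forall n, (n >= N)%nat -> hnorm (hsub (v n) l) < eps.

Lemma hinner_add_r {X : HilbertSpace} (x y z : X) :
  hinner x (hadd y z) = hinner x y + hinner x z.
Proof. rewrite (hinner_sym X x), (hinner_sym X x y), (hinner_sym X x z). apply hinner_add_l. Qed.

Lemma hinner_scal_r {X : HilbertSpace} a (x y : X) :
  hinner x (hscal a y) = a * hinner x y.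
Proof. rewrite (hinner_sym X x), (hinner_sym X x y). apply hinner_scal_l. Qed.

Lemma hinner_zero_l {X : HilbertSpace} (y : X) : hinner hzero y = 0.
Proof. pose proof (hinner_add_l X hzero hzero y) as H. rewrite hadd_zero in H. lra. Qed.

Lemma hinner_opp_l {X : HilbertSpace} (x y : X) : hinner (hopp x) y = - hinner x y.
Proof. pose proof (hinner_add_l X x (hopp x) y) as H. rewrite hadd_opp, hinner_zero_l in H. lra. Qed.

Lemma hinner_opp_r {X : HilbertSpace} (x y : X) : hinner x (hopp y) = - hinner x y.
Proof. rewrite (hinner_sym X x), (hinner_sym X x y). apply hinner_opp_l. Qed.

Ltac hexp_all := unfold hsub, nsq, mid in *;
  repeat first [rewrite hinner_add_l in * | rewrite hinner_add_r in * | rewrite hinner_opp_l in *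
    | rewrite hinner_opp_r in * | rewrite hinner_scal_l in * | rewrite hinner_scal_r in *].
Ltac hexp := unfold hsub, nsq, mid;
  repeat first [rewrite hinner_add_l | rewrite hinner_add_r | rewrite hinner_opp_l
    | rewrite hinner_opp_r | rewrite hinner_scal_l | rewrite hinner_scal_r].

Lemma nsq_nonneg {X : HilbertSpace} (x : X) : 0 <= nsq x.
Proof. apply hinner_pos. Qed.

Lemma hnorm_nonneg {X : HilbertSpace} (x : X) : 0 <= hnorm x.
Proof. apply sqrt_pos. Qed.

Lemma hnorm_sq {X : HilbertSpace} (x : X) : hnorm x * hnorm x = nsq x.
Proof. apply sqrt_sqrt, hinner_pos. Qed.

Lemma cs_sq {X : HilbertSpace} (x y : X) : hinner x y * hinner x y <= nsq x * nsq y.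
Proof.
  destruct (Req_dec (nsq y) 0) as [H0|H0].
  - apply hinner_def in H0. subst y. rewrite (hinner_sym X x), hinner_zero_l.
    pose proof (nsq_nonneg x). unfold nsq. rewrite hinner_zero_l. lra.
  - pose proof (nsq_nonneg y) as Hy.
    set (t := - hinner x y / nsq y).
    pose proof (hinner_pos X (hadd x (hscal t y))) as Hp.
    hexp_all. rewrite (hinner_sym X y x) in Hp. 
    assert (E : hinner x x + t * hinner x y + (t * hinner x y + t * (t * hinner y y))
              = hinner x x - hinner x y * hinner x y / hinner y y).
    { unfold t, nsq. field. exact H0. }
    rewrite E in Hp.
    assert (Hy' : 0 < hinner y y) by (unfold nsq in *; lra).
    assert (hinner x y * hinner x y / hinner y y <= hinner x x) by lra.
    apply (Rmult_le_compat_r (hinner y y)) in H; [|lra].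
    unfold Rdiv in H. rewrite Rmult_assoc, Rinv_l in H; lra.
Qed.

Lemma cs {X : HilbertSpace} (x y : X) : Rabs (hinner x y) <= hnorm x * hnorm y.
Proof.
  pose proof (cs_sq x y). pose proof (hnorm_sq x). pose proof (hnorm_sq y).
  pose proof (hnorm_nonneg x). pose proof (hnorm_nonneg y).
  rewrite <- (Rabs_right (hnorm x * hnorm y)) by nra.
  apply Rsqr_le_abs_0. unfold Rsqr. nra.
Qed.

Lemma cs_le {X : HilbertSpace} (x y : X) : hinner x y <= hnorm x * hnorm y.
Proof. pose proof (cs x y). pose proof (Rle_abs (hinner x y)). lra. Qed.

Lemma cs_ge {X : HilbertSpace} (x y : X) : - (hnorm x * hnorm y) <= hinner x y.
Proof. pose proof (cs x y). pose proof (Rle_abs (- hinner x y)). rewrite Rabs_Ropp in H0. lra. Qed.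

Lemma le_eps (a b : R) : (forall e, 0 < e -> a <= b + e) -> a <= b.
Proof. intros H. destruct (Rle_dec a b); auto. specialize (H ((a-b)/2)). lra. Qed.

Lemma inv_Sn_pos (n : nat) : 0 < / INR (S n).
Proof. apply Rinv_0_lt_compat, lt_0_INR; lia. Qed.

Lemma inv_Sn_le (n N : nat) : (N <= n)%nat -> / INR (S n) <= / INR (S N).
Proof. intros. apply Rinv_le_contravar; [apply lt_0_INR; lia | apply le_INR; lia]. Qed.

Lemma small_inv (eps : R) : eps > 0 -> exists N, forall n, (n >= N)%nat -> / INR (S n) < eps.
Proof.
  intros he. destruct (INR_unbounded (/ eps)) as [N HN]. exists N. intros n Hn.
  pose proof (inv_Sn_le n N Hn). assert (/ INR (S N) < eps); [|lra].
  rewrite <- (Rinv_inv eps). apply Rinv_lt_contravar.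
  - apply Rmult_lt_0_compat; [apply Rinv_0_lt_compat; lra | apply lt_0_INR; lia].
  - rewrite S_INR. lra.
Qed.

Lemma sqrt_lt_of_sq a e : 0 <= a -> 0 < e -> a < e * e -> sqrt a < e.
Proof. intros. pose proof (sqrt_pos a). pose proof (sqrt_sqrt a H). nra. Qed.

Lemma conv_pick {X : HilbertSpace} (v : nat -> X) x : conv v x ->
  forall e, 0 < e -> exists n, hnorm (hsub (v n) x) < e /\ / INR (S n) < e.
Proof.
  intros Hc e he. destruct (Hc e he) as [N1 H1]. destruct (small_inv e he) as [N2 H2].
  exists (max N1 N2). split; [apply H1 | apply H2]; lia.
Qed.

Lemma min_exists {X : HilbertSpace} (P : X -> Prop) (G : X -> R) (c : R) :
  0 < c -> (exists y, P y) -> (forall y, P y -> 0 <= G y) ->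
  (forall a b, P a -> P b -> P (mid a b) /\ G (mid a b) <= (G a + G b)/2 - c * nsq (hsub a b)) ->
  (forall v x m, (forall n, P (v n)) -> (forall n, G (v n) <= m + / INR (S n)) -> conv v x ->
     P x /\ G x <= m) ->
  exists x, P x /\ forall y, P y -> G x <= G y.
Proof.
  intros hc [y0 Py0] hG0 hmid hclos.
  set (E := fun r => exists y, P y /\ r = - G y).
  assert (bE : bound E).
  { exists 0. intros r [y [Py ->]]. specialize (hG0 y Py). lra. }
  assert (nE : exists r, E r) by (exists (- G y0); exists y0; auto).
  destruct (completeness E bE nE) as [L [HL1 HL2]].
  set (m := -L).
  assert (Hm : forall y, P y -> m <= G y).
  { intros y Py. unfold m. assert (Ey : E (-G y)) by (exists y; auto).
    specialize (HL1 _ Ey). lra. }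
  assert (Hex : forall n:nat, exists y, P y /\ G y <= m + / INR (S n)).
  { intro n. destruct (classic (exists y, P y /\ G y <= m + / INR (S n))) as [h|h]; auto.
    exfalso. pose proof (inv_Sn_pos n).
    assert (Hub : is_upper_bound E (L - / INR (S n))).
    { intros r [y [Py ->]]. destruct (Rle_dec (G y) (m + / INR (S n))) as [h1|h1].
      - exfalso. apply h. exists y. auto.
      - unfold m in h1. lra. }
    specialize (HL2 _ Hub). lra. }
  set (v := fun n => proj1_sig (constructive_indefinite_description _ (Hex n))).
  assert (hv : forall n, P (v n) /\ G (v n) <= m + / INR (S n)).
  { intro n. exact (proj2_sig (constructive_indefinite_description _ (Hex n))). }
  destruct (hcomplete X v) as [x hx].
  { intros eps heps.
    destruct (small_inv (c * (eps * eps))) as [N HN]. { apply Rmult_lt_0_compat; nra. }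
    exists N. intros n k Hn Hk.
    destruct (hv n) as [Pn Gn]. destruct (hv k) as [Pk Gk].
    destruct (hmid _ _ Pn Pk) as [Pm Gm]. specialize (Hm _ Pm).
    specialize (HN N (le_n N)).
    pose proof (inv_Sn_le n N Hn). pose proof (inv_Sn_le k N Hk).
    apply sqrt_lt_of_sq; [apply hinner_pos | lra |].
    fold (hsub (v n) (v k)). fold (nsq (hsub (v n) (v k))).
    pose proof (nsq_nonneg (hsub (v n) (v k))).
    assert (c * nsq (hsub (v n) (v k)) < c * (eps * eps)) by lra.
    apply Rmult_lt_reg_l in H2; lra. }
  destruct (hclos v x m) as [Px Gx].
  - intro n. apply hv.
  - intro n. apply hv.
  - exact hx.
  - exists x. split; auto. intros y Py. specialize (Hm y Py). lra.
Qed.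

Lemma mid_nsq {X : HilbertSpace} (a b w : X) :
  nsq (hsub (mid a b) w) = (nsq (hsub a w) + nsq (hsub b w)) / 2 - nsq (hsub a b) / 4.
Proof.
  hexp. rewrite (hinner_sym X b a), (hinner_sym X w a), (hinner_sym X w b). field.
Qed.

Lemma mid_nsq0 {X : HilbertSpace} (a b : X) :
  nsq (mid a b) = (nsq a + nsq b) / 2 - nsq (hsub a b) / 4.
Proof.
  hexp. rewrite (hinner_sym X b a). field.
Qed.

Lemma shift_nsq {X : HilbertSpace} (x y w : X) :
  nsq (hsub y w) = nsq (hsub y x) + 2 * hinner (hsub y x) (hsub x w) + nsq (hsub x w).
Proof.
  hexp. rewrite (hinner_sym X x y), (hinner_sym X w y), (hinner_sym X w x). ring.
Qed.

Lemma prox {X : HilbertSpace} (f : X -> R) (w : X) (k : R) : 0 < k ->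
  (forall y, 0 <= f y) -> convex_fun f -> lsc_fun f ->
  exists x, forall y, f x + k * nsq (hsub x w) <= f y + k * nsq (hsub y w).
Proof.
  intros hk hf hconv hlsc.
  destruct (min_exists (fun _ => True) (fun y => f y + k * nsq (hsub y w)) (k / 4))
    as [x [_ Hx]].
  - lra.
  - exists w. auto.
  - intros y _. pose proof (hf y). pose proof (nsq_nonneg (hsub y w)). nra.
  - intros a b _ _. split; auto.
    rewrite mid_nsq. assert (Hc : f (mid a b) <= /2 * f a + (1 - /2) * f b).
    { apply hconv. lra. }
    lra.
  - intros v x m _ Hv Hc. split; auto.
    apply le_eps. intros e he.
    destruct (hlsc x (e/3)) as [d [hd Hd]]; [lra|].
    set (R0 := hnorm (hsub x w)).
    assert (hR0 : 0 <= R0) by apply hnorm_nonneg.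
    set (r := Rmin d (e / (3 * (2 * k * R0 + 1)))).
    assert (hr : 0 < r).
    { unfold r. apply Rmin_glb_lt; auto. apply Rdiv_lt_0_compat; nra. }
    destruct (conv_pick v x Hc (Rmin r (e/3))) as [n [Hn1 Hn2]].
    { apply Rmin_glb_lt; lra. }
    assert (Hn1' : hnorm (hsub (v n) x) < r) by (pose proof (Rmin_l r (e/3)); lra).
    assert (Hn2' : / INR (S n) < e/3) by (pose proof (Rmin_r r (e/3)); lra).
    assert (Hd' : f x - e/3 < f (v n)).
    { apply Hd. pose proof (Rmin_l d (e / (3 * (2 * k * R0 + 1)))). fold r in H. lra. }
    pose proof (shift_nsq x (v n) w) as Hs.
    pose proof (cs_ge (hsub (v n) x) (hsub x w)) as Hcs. fold R0 in Hcs.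
    pose proof (nsq_nonneg (hsub (v n) x)).
    pose proof (hnorm_nonneg (hsub (v n) x)).
    assert (Hr2 : r * (2 * k * R0 + 1) <= e / 3).
    { pose proof (Rmin_r d (e / (3 * (2 * k * R0 + 1)))). fold r in H1.
      apply (Rmult_le_compat_r (2 * k * R0 + 1)) in H1; [|nra].
      replace (e / (3 * (2 * k * R0 + 1)) * (2 * k * R0 + 1)) with (e/3) in H1 by (field; nra).
      lra. }
    specialize (Hv n).
    assert (k * nsq (hsub x w) <= k * nsq (hsub (v n) w) + 2 * k * R0 * r).
    { rewrite Hs. assert (hnorm (hsub (v n) x) * R0 <= r * R0) by nra. nra. }
    nra.
  - exists x. intro y. apply Hx. auto.
Qed.

Lemma prox_subdiff {X : HilbertSpace} (f : X -> R) (w : X) (k : R) (x : X) : 0 < k ->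
  convex_fun f ->
  (forall y, f x + k * nsq (hsub x w) <= f y + k * nsq (hsub y w)) ->
  subdiff f x (hscal (2 * k) (hsub w x)).
Proof.
  intros hk hconv Hx y.
  set (A := f y - f x - hinner (hscal (2 * k) (hsub w x)) (hsub y x)).
  set (B := nsq (hsub y x)).
  assert (HB : 0 <= B) by apply nsq_nonneg.
  assert (Hs : forall s, 0 < s <= 1 -> 0 <= A + k * s * B).
  { intros s hs.
    assert (Hc : f (hadd (hscal s y) (hscal (1 - s) x)) <= s * f y + (1 - s) * f x)
      by (apply hconv; lra).
    specialize (Hx (hadd (hscal s y) (hscal (1 - s) x))).
    assert (E : nsq (hsub (hadd (hscal s y) (hscal (1 - s) x)) w) =
       nsq (hsub x w) + 2 * s * hinner (hsub y x) (hsub x w) + s * s * B).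
    { unfold B. hexp. rewrite (hinner_sym X x y), (hinner_sym X w y), (hinner_sym X w x). ring. }
    rewrite E in Hx.
    assert (E2 : hinner (hscal (2 * k) (hsub w x)) (hsub y x) = - 2 * k * hinner (hsub y x) (hsub x w)).
    { hexp. rewrite (hinner_sym X w y), (hinner_sym X x y), (hinner_sym X w x). ring. }
    assert (s * (A + k * s * B) >= 0).
    { unfold A. rewrite E2. nra. }
    nra. }
  destruct (Rle_dec 0 A) as [hA|hA]; [unfold A in hA; lra|].
  exfalso.
  set (s := Rmin 1 (- A / (2 * k * B + 1))).
  assert (hs0 : 0 < s).
  { unfold s. apply Rmin_glb_lt; [lra|]. apply Rdiv_lt_0_compat; nra. }
  assert (hs1 : s <= 1) by apply Rmin_l.
  assert (hs2 : s * (2 * k * B + 1) <= - A).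
  { pose proof (Rmin_r 1 (- A / (2 * k * B + 1))). fold s in H.
    apply (Rmult_le_compat_r (2 * k * B + 1)) in H; [|nra].
    replace (- A / (2 * k * B + 1) * (2 * k * B + 1)) with (-A) in H by (field; nra). lra. }
  specialize (Hs s (conj hs0 hs1)). nra.
Qed.

Lemma min_norm_exists {X : HilbertSpace} (f : X -> R) (x0 xi : X) :
  subdiff f x0 xi -> exists z, min_norm_subgrad f x0 z.
Proof.
  intros Hxi.
  destruct (min_exists (subdiff f x0) nsq (/4)) as [z [Pz Hz]].
  - lra.
  - exists xi. auto.
  - intros y _. apply nsq_nonneg.
  - intros a b Pa Pb. split.
    + intro p. specialize (Pa p). specialize (Pb p). unfold mid.
      rewrite hinner_add_l, !hinner_scal_l. lra.
    + rewrite mid_nsq0. lra.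
  - intros v x m Pv Hv Hc.
    assert (Hm : -1 <= m).
    { specialize (Hv 0%nat). pose proof (nsq_nonneg (v 0%nat)). simpl in Hv.
      rewrite Rinv_1 in Hv. lra. }
    split.
    + intro p. apply le_eps. intros e he.
      set (h := hsub p x0).
      set (H0 := hnorm h). assert (hH0 : 0 <= H0) by apply hnorm_nonneg.
      destruct (conv_pick v x Hc (e / (H0 + 1))) as [n [Hn _]].
      { apply Rdiv_lt_0_compat; lra. }
      specialize (Pv n p). fold h in Pv.
      assert (E : hinner x h = hinner (v n) h - hinner (hsub (v n) x) h).
      { unfold hsub. rewrite hinner_add_l, hinner_opp_l. ring. }
      pose proof (cs_ge (hsub (v n) x) h) as Hcs. fold H0 in Hcs.
      pose proof (hnorm_nonneg (hsub (v n) x)).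
      assert (hnorm (hsub (v n) x) * H0 <= e).
      { apply (Rmult_lt_compat_r (H0 + 1)) in Hn; [|lra].
        replace (e / (H0 + 1) * (H0 + 1)) with e in Hn by (field; lra). nra. }
      fold h. lra.
    + apply le_eps. intros e he.
      set (M := Rabs m + 2).
      assert (HM : 2 <= M) by (unfold M; pose proof (Rabs_pos m); lra).
      set (r := Rmin 1 (e / (2 * (2 * M + 1)))).
      assert (hr : 0 < r).
      { unfold r. apply Rmin_glb_lt; [lra|]. apply Rdiv_lt_0_compat; lra. }
      destruct (conv_pick v x Hc (Rmin r (e/2))) as [n [Hn1 Hn2]].
      { apply Rmin_glb_lt; lra. }
      assert (Hn1' : hnorm (hsub (v n) x) < r) by (pose proof (Rmin_l r (e/2)); lra).
      assert (Hn2' : / INR (S n) < e/2) by (pose proof (Rmin_r r (e/2)); lra).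
      assert (hr1 : r <= 1) by apply Rmin_l.
      assert (hr2 : r * (2 * M + 1) <= e / 2).
      { pose proof (Rmin_r 1 (e / (2 * (2 * M + 1)))). fold r in H.
        apply (Rmult_le_compat_r (2 * M + 1)) in H; [|lra].
        replace (e / (2 * (2 * M + 1)) * (2 * M + 1)) with (e/2) in H by (field; lra). lra. }
      specialize (Hv n).
      pose proof (inv_Sn_le n 0 (Nat.le_0_l n)) as Hle. change (INR (S 0)) with 1 in Hle. rewrite Rinv_1 in Hle.
      assert (HvM : hnorm (v n) <= M).
      { pose proof (hnorm_sq (v n)). pose proof (hnorm_nonneg (v n)).
        pose proof (Rle_abs m). assert (EM : M = Rabs m + 2) by reflexivity.
        destruct (Rle_dec (hnorm (v n)) M) as [|hn]; auto. exfalso. apply Rnot_le_lt in hn.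
        assert (M * M < hnorm (v n) * hnorm (v n)) by (apply Rmult_le_0_lt_compat; lra).
        nra. }
      assert (E : nsq x = nsq (v n) - 2 * hinner (v n) (hsub (v n) x) + nsq (hsub (v n) x)).
      { hexp. rewrite (hinner_sym X x (v n)). ring. }
      pose proof (cs_le (v n) (hsub (v n) x)).
      pose proof (hnorm_sq (hsub (v n) x)).
      pose proof (hnorm_nonneg (hsub (v n) x)). pose proof (hnorm_nonneg (v n)).
      assert (hinner (v n) (hsub (v n) x) >= - (M * r)).
      { pose proof (cs_ge (v n) (hsub (v n) x)). nra. }
      assert (nsq (hsub (v n) x) <= r).
      { nra. }
      rewrite E. nra.
  - exists z. split; auto. intros zeta Hzeta. specialize (Hz zeta Hzeta).
    apply sqrt_le_1_alt. exact Hz.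
Qed.

Theorem mainTheorem5 (X : HilbertSpace) (betahat : X -> R) (Psi : R -> R)
  (hbeta_nonneg : forall u, 0 <= betahat u)
  (hbeta_convex : convex_fun betahat)
  (hbeta_lsc : lsc_fun betahat)
  (hPsi_nonneg : forall t, 0 <= t -> 0 <= Psi t)
  (hPsi_cont : continuous_on_nonneg Psi)
  (hbound : forall (u zeta0 : X), min_norm_subgrad betahat u zeta0 ->
              hnorm zeta0 <= Psi (betahat u)) :
  forall (u zeta : X), subdiff betahat u zeta -> hnorm zeta <= Psi (betahat u).
Proof.
  intros u zeta Hz.
  set (f := betahat) in *.
  set (Z := hnorm zeta).
  assert (hZ : 0 <= Z) by apply hnorm_nonneg.
  assert (hZ2 : Z * Z = nsq zeta) by apply hnorm_sq.
  set (K := f (hadd u zeta) - f u).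
  assert (hK : Z * Z <= K).
  { pose proof (Hz (hadd u zeta)) as H. 
    assert (E : hinner zeta (hsub (hadd u zeta) u) = nsq zeta) by (hexp; ring).
    unfold K. lra. }
  set (C := 2 * Z + 2 * K + 1).
  assert (hC : 1 <= C) by (unfold C; nra).
  set (Q := K + Z * C + 1).
  assert (hQ : 1 <= Q) by (unfold Q; nra).
  assert (Hgoal : forall eps, 0 < eps -> Z <= Psi (f u) + 2 * eps).
  2:{ apply le_eps. intros e he. pose proof (Hgoal (e/2)). lra. }
  intros eps heps.
  destruct (hPsi_cont (f u) (hbeta_nonneg u) eps heps) as [d [hd Hd]].
  set (t := Rmin 1 (Rmin (eps / (2 * C)) (d / (2 * Q)))).
  assert (ht0 : 0 < t).
  { unfold t. repeat apply Rmin_glb_lt; try lra; apply Rdiv_lt_0_compat; lra. }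
  assert (ht1 : t <= 1) by apply Rmin_l.
  assert (ht2 : t * (2 * C) <= eps).
  { pose proof (Rmin_r 1 (Rmin (eps / (2 * C)) (d / (2 * Q)))) as H1.
    pose proof (Rmin_l (eps / (2 * C)) (d / (2 * Q))) as H2. fold t in H1.
    assert (H : t <= eps / (2 * C)) by lra.
    apply (Rmult_le_compat_r (2 * C)) in H; [|lra].
    replace (eps / (2 * C) * (2 * C)) with eps in H by (field; lra). lra. }
  assert (ht3 : t * (2 * Q) <= d).
  { pose proof (Rmin_r 1 (Rmin (eps / (2 * C)) (d / (2 * Q)))) as H1.
    pose proof (Rmin_r (eps / (2 * C)) (d / (2 * Q))) as H2. fold t in H1.
    assert (H : t <= d / (2 * Q)) by lra.
    apply (Rmult_le_compat_r (2 * Q)) in H; [|lra].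
    replace (d / (2 * Q) * (2 * Q)) with d in H by (field; lra). lra. }
  set (w := hadd (hscal t (hadd u zeta)) (hscal (1 - t) u)).
  set (k := / (2 * (t * t * t))).
  assert (hk : 0 < k).
  { unfold k. apply Rinv_0_lt_compat. assert (0 < t * t * t) by (repeat apply Rmult_lt_0_compat; lra). lra. }
  destruct (prox f w k hk hbeta_nonneg hbeta_convex hbeta_lsc) as [x Hx].
  pose proof (prox_subdiff f w k x hk hbeta_convex Hx) as Hxi.
  set (dd := hsub x w).
  set (D := hnorm dd).
  assert (hD0 : 0 <= D) by apply hnorm_nonneg.
  assert (hD2 : D * D = nsq dd) by apply hnorm_sq.
  assert (Hfw : f w <= f u + t * K).
  { pose proof (hbeta_convex (hadd u zeta) u t (conj (Rlt_le _ _ ht0) ht1)). fold w in H.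
    unfold K. fold f in H. lra. }
  assert (Hxw : f x + k * nsq dd <= f w).
  { pose proof (Hx w). assert (E : nsq (hsub w w) = 0) by (hexp; ring). unfold dd. rewrite E, Rmult_0_r, Rplus_0_r in H. exact H. }
  assert (I1 : hinner zeta (hsub x u) = hinner zeta dd + t * nsq zeta).
  { unfold dd, w. hexp. ring. }
  assert (Hfx_low : f u + hinner zeta dd + t * nsq zeta <= f x).
  { pose proof (Hz x). lra. }
  assert (Hcs1 : - (Z * D) <= hinner zeta dd) by apply cs_ge.
  assert (HD : k * (D * D) <= t * K + Z * D).
  { rewrite hD2. pose proof (nsq_nonneg zeta). assert (0 <= t * nsq zeta) by (apply Rmult_le_pos; lra). lra. }
  assert (HD' : D * D <= 2 * (t * t * t) * (t * K + Z * D)).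
  { assert (E : 2 * (t * t * t) * (k * (D * D)) = D * D).
    { unfold k. field. lra. }
    rewrite <- E. apply Rmult_le_compat_l; [|exact HD].
    assert (0 < t * t * t) by (repeat apply Rmult_lt_0_compat; lra). lra. }
  assert (HDC : D <= C * (t * t)).
  { destruct (Rle_dec D (C * (t * t))) as [|hn]; auto. exfalso. apply Rnot_le_lt in hn.
    assert (ht2' : 0 < t * t) by nra.
    assert (A1 : D * D <= 2 * (t * t) * (t * t) * K + 2 * (t * t) * Z * D).
    { assert (t * t * t * (t * K + Z * D) <= (t * t) * (t * t) * K + (t * t) * Z * D).
      { assert (0 <= Z * D) by nra. assert (0 <= K) by nra.
        assert (t * t * t * (Z * D) <= t * t * (Z * D)).
        { apply Rmult_le_compat_r; [lra|]. nra. }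
        nra. }
      nra. }
    assert (0 < C * (t * t)) by (apply Rmult_lt_0_compat; lra).
    assert (A2 : C * (t * t) * D < D * D) by (apply Rmult_lt_compat_r; lra).
    assert (A3 : (C - 2 * Z) * D < 2 * (t * t) * K).
    { apply (Rmult_lt_reg_l (t * t)); [lra|]. nra. }
    assert (A4 : (C - 2 * Z) = 2 * K + 1) by (unfold C; ring).
    rewrite A4 in A3.
    assert (0 <= K) by nra.
    assert ((2 * K + 1) * (C * (t * t)) <= (2 * K + 1) * D) by (apply Rmult_le_compat_l; lra).
    nra. }
  assert (Hfa : Rabs (f x - f u) < d).
  { assert (Hup : f x <= f u + t * K).
    { pose proof (nsq_nonneg dd). nra. }
    assert (Hlow : f u - Z * (C * (t * t)) <= f x).
    { pose proof (nsq_nonneg zeta). assert (Z * D <= Z * (C * (t * t))) by nra. nra. }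
    assert (t * K + Z * (C * (t * t)) < d).
    { assert (Z * (C * (t * t)) <= Z * C * t).
      { assert (0 <= Z * C) by (apply Rmult_le_pos; lra).
        assert (t * t <= t * 1) by (apply Rmult_le_compat_l; lra).
        replace (Z * (C * (t * t))) with ((Z * C) * (t * t)) by ring.
        replace (Z * C * t) with ((Z * C) * (t * 1)) by ring.
        apply Rmult_le_compat_l; lra. }
      assert (E : t * (2 * Q) = 2 * (t * K) + 2 * (Z * C * t) + 2 * t) by (unfold Q; ring).
      assert (0 <= K) by nra.
      assert (0 <= t * K) by (apply Rmult_le_pos; lra).
      assert (0 <= Z * C * t) by (apply Rmult_le_pos; [apply Rmult_le_pos|]; lra).
      lra. }
    assert (0 <= K) by nra.
    apply Rabs_def1; nra. }
  assert (Hb : forall eta, subdiff f x eta -> Z <= hnorm eta + eps).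
  { intros eta Heta.
    set (E := hnorm eta). assert (hE : 0 <= E) by apply hnorm_nonneg.
    pose proof (Heta u) as H1. pose proof (Hz x) as H2.
    assert (I2 : hinner eta (hsub u x) = - hinner eta dd - t * hinner eta zeta).
    { unfold dd, w. hexp. ring. }
    pose proof (cs_le eta dd) as C1. pose proof (cs_le eta zeta) as C2.
    fold E D in C1. fold E Z in C2.
    assert (M1 : t * (Z * Z) <= E * D + t * E * Z + Z * D) by nra.
    assert (M2 : t * (Z * Z) <= (E + Z) * C * (t * t) + t * E * Z).
    { assert ((E + Z) * D <= (E + Z) * (C * (t * t))) by (apply Rmult_le_compat_l; lra). nra. }
    assert (M3 : Z * Z <= (E + Z) * C * t + E * Z).
    { apply (Rmult_le_reg_l t); [lra|]. nra. }
    destruct (Rle_dec Z (E + eps)) as [|hn]; [fold E; lra|]. exfalso. apply Rnot_le_lt in hn.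
    assert (Z * (E + eps) < Z * Z) by (apply Rmult_lt_compat_l; lra).
    assert ((E + Z) * C * t <= 2 * Z * C * t).
    { assert (0 <= C * t) by nra. nra. }
    nra. }
  destruct (min_norm_exists f x _ Hxi) as [z0 Hz0].
  pose proof (hbound x z0 Hz0) as Hb0. fold f in Hb0.
  pose proof (Hb z0 (proj1 Hz0)).
  pose proof (Hd (f x) (hbeta_nonneg x) Hfa).
  apply Rabs_def2 in H0. lra.
Qed.
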